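(* Let $n$ be a positive integer. Then for all complex numbers $x$ and $y$ with $y\neq -1$, $$\sum_{r=2}^{n+1}\frac{(-1)^rB_{r}(x)}{r}\binom{n-1}{r-2}\binom{y}{r-1}=\sum_{r=1}^{n}\binom{n-1}{r-1}\binom{y+n-r}{n}\left(\frac{B_{r+1}(-x)}{r+1}+\frac{B_{r}(-x)}{r}\right)+\frac{1}{y+1}\binom{y+n}{n+1}.$$
   Context: The Bernoulli polynomials $B_n(x)$ are defined by $\sum_{n=0}^\infty\frac{B_n(x)}{n!}t^n=\frac{te^{xt}}{e^t-1}$. For a complex number $y$ and an integer $k\ge0$, $\binom{y}{k}=\frac{y(y-1)\cdots(y-k+1)}{k!}$; for ordinary integer binomial coefficients $\binom{a}{b}$ with $a\ge 0$ and $b<0$ or $b>a$, $\binom{a}{b}=0$. *)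

(* Defs.v *)
From HB Require Import structures.
From mathcomp Require Import all_boot all_order all_algebra.
From mathcomp Require Import complex.
From mathcomp Require Import Rstruct.
Set Implicit Arguments. Unset Strict Implicit. Unset Printing Implicit Defensive.
Import Order.TTheory GRing.Theory Num.Theory.
Local Open Scope ring_scope.

Notation CC := (complex Rdefinitions.R).

(* Bernoulli polynomials, defined by the generating function
     sum_n B_n(x) t^n / n! = t e^{xt} / (e^t - 1).
   Multiplying by (e^t - 1) and comparing the coefficients of t^(m+1) gives
     sum_{k=0}^{m} 'C(m+1,k) B_k(x) = (m+1) x^m,   for all m,
   which determines the B_m(x) recursively:
     B_m(x) = x^m - (m+1)^{-1} sum_{k<m} 'C(m+1,k) B_k(x).
   [bern_seq m x] is the list [:: B_0(x); ...; B_m(x)]. *)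
Fixpoint bern_seq (m : nat) (x : CC) : seq CC :=
  match m with
  | 0 => [:: 1]
  | m'.+1 =>
      let s := bern_seq m' x in
      rcons s (x ^+ m - (m.+1)%:R^-1 * \sum_(k < m) ('C(m.+1, k))%:R * s`_k)
  end.

Definition bernoulli_poly (m : nat) (x : CC) : CC := (bern_seq m x)`_m.

Definition binomC (y : CC) (k : nat) : CC :=
  (\prod_(i < k) (y - i%:R)) / (k`!)%:R.

(* Main.v *)
Require Import Defs.
From HB Require Import structures.
From mathcomp Require Import all_boot all_order all_algebra.
From mathcomp Require Import complex Rstruct.
From mathcomp Require Import ring lra zify.
Import Order.TTheory GRing.Theory Num.Theory.
Local Open Scope ring_scope.

Lemma natr_neq0 (m : nat) : (m.+1)%:R != 0 :> CC.
Proof. by rewrite pnatr_eq0. Qed.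

Lemma pascal_sum (a : nat -> CC) n :
  \sum_(i < n.+2) ('C(n.+1, i))%:R * a i =
  \sum_(i < n.+1) ('C(n, i))%:R * a i + \sum_(i < n.+1) ('C(n, i))%:R * a i.+1.
Proof.
rewrite big_ord_recl bin0.
under eq_bigr => i _ do rewrite binS natrD mulrDl.
rewrite big_split /= addrA [X in _ = X + _]big_ord_recl bin0.
congr (_ + _); congr (_ + _).
by rewrite big_ord_recr /= bin_small // mul0r addr0.
Qed.

Definition altf (N j : nat) : CC :=
  \sum_(k < N.+1) ('C(N, k))%:R * (('C(k, j))%:R * (-1) ^+ k).

Lemma altf0 N j : (j < N)%N -> altf N j = 0.
Proof.
elim: N j => [|N IH] j // hj.
rewrite /altf (pascal_sum (fun k => (('C(k, j))%:R * (-1) ^+ k))) /=.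
case: j hj => [|j] hj.
  rewrite -big_split /=; apply: big1 => i _; rewrite !bin0 exprS; ring.
rewrite -big_split /=.
transitivity (- altf N j); last by rewrite IH ?oppr0.
rewrite /altf -sumrN; apply: eq_bigr => i _; rewrite binS natrD exprS; ring.
Qed.

Lemma bern_size m x : size (bern_seq m x) = m.+1.
Proof. by elim: m => [|m IH] //=; rewrite size_rcons IH. Qed.

Lemma bern_nth m k x : (k <= m)%N -> (bern_seq m x)`_k = bernoulli_poly k x.
Proof.
elim: m => [|m IH]; first by rewrite leqn0 => /eqP ->.
rewrite leq_eqVlt => /orP [/eqP -> //| hk].
by rewrite /= nth_rcons bern_size hk IH.
Qed.

Lemma bernS m x : bernoulli_poly m.+1 x = x ^+ m.+1 -
  (m.+2)%:R^-1 * \sum_(k < m.+1) ('C(m.+2, k))%:R * bernoulli_poly k x.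
Proof.
rewrite /bernoulli_poly /= nth_rcons bern_size ltnn eqxx.
congr (_ - _ * _); apply: eq_bigr => k _; rewrite bern_nth //.
by rewrite -ltnS.
Qed.

Lemma bern0 x : bernoulli_poly 0 x = 1.
Proof. by []. Qed.

Lemma bern_rec m x :
  \sum_(k < m.+1) ('C(m.+1, k))%:R * bernoulli_poly k x = (m.+1)%:R * x ^+ m.
Proof.
case: m => [|m]; first by rewrite big_ord1 bern0 /= mulr1.
rewrite big_ord_recr /= binSn bernS.
have h := natr_neq0 m.+1.
set S := \sum_(_ < _) _.
by rewrite mulrBr mulrA mulfV // mul1r addrC subrK.
Qed.

Lemma rec_uniq (a b : nat -> CC) (F : nat -> CC) :
  (forall m, \sum_(k < m.+1) ('C(m.+1, k))%:R * a k = F m) ->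
  (forall m, \sum_(k < m.+1) ('C(m.+1, k))%:R * b k = F m) ->
  forall m, a m = b m.
Proof.
move=> ha hb; elim/ltn_ind => m IH.
have := ha m; rewrite -(hb m) !big_ord_recr /= binSn.
have -> : \sum_(i < m) ('C(m.+1, i))%:R * a i = \sum_(i < m) ('C(m.+1, i))%:R * b i.
  by apply: eq_bigr => i _; rewrite IH.
move/addrI/eqP; rewrite (inj_eq (mulfI (natr_neq0 m))).
by move/eqP.
Qed.

Lemma widen_bin (g : nat -> CC) k m : (k <= m)%N ->
  \sum_(j < k.+1) ('C(k, j))%:R * g j = \sum_(j < m.+1) ('C(k, j))%:R * g j.
Proof.
move=> hkm; rewrite (big_ord_widen _ (fun j => ('C(k, j))%:R * g j) (hkm : (k.+1 <= m.+1)%N)).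
rewrite big_mkcond; apply: eq_bigr => j _; case: ifP => // /negbT.
by rewrite -leqNgt => h; rewrite bin_small // mul0r.
Qed.

Lemma alt_sum m j : (j <= m)%N ->
  \sum_(k < m.+1) ('C(m.+1, k))%:R * (('C(k, j))%:R * (-1) ^+ k) =
  (-1) ^+ m * ('C(m.+1, j))%:R :> CC.
Proof.
move=> hj; have := @altf0 m.+1 j hj.
rewrite /altf big_ord_recr /= binn => /eqP; rewrite addr_eq0 => /eqP ->.
rewrite exprS; ring.
Qed.

Definition bref x k := (-1) ^+ k * \sum_(j < k.+1) ('C(k, j))%:R * bernoulli_poly j x.

Lemma bref_rec x m :
  \sum_(k < m.+1) ('C(m.+1, k))%:R * bref x k = (m.+1)%:R * (- x) ^+ m.
Proof.
rewrite /bref.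
transitivity (\sum_(k < m.+1) \sum_(j < m.+1)
   ('C(m.+1, k))%:R * (('C(k, j))%:R * (-1) ^+ k) * bernoulli_poly j x).
  apply: eq_bigr => k _; rewrite (@widen_bin (fun j => bernoulli_poly j x) k m (ltn_ord k : (k <= m)%N)).
  rewrite !mulr_sumr; apply: eq_bigr => j _; ring.
rewrite exchange_big /=.
transitivity (\sum_(j < m.+1) (-1) ^+ m * (('C(m.+1, j))%:R * bernoulli_poly j x)).
  apply: eq_bigr => j _; rewrite -mulr_suml alt_sum ?mulrA //.
  by rewrite -ltnS.
by rewrite -mulr_sumr bern_rec [(- x) ^+ m]exprNn; ring.
Qed.

Lemma bern_neg k x : bernoulli_poly k (- x) = bref x k.
Proof.
move: k; apply: (@rec_uniq (fun k => bernoulli_poly k (- x)) (bref x) (fun m => (m.+1)%:R * (- x) ^+ m)) => m.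
  exact: (bern_rec m (- x)).
exact: bref_rec.
Qed.

Definition dif (w : nat -> CC) i k :=
  \sum_(l < i.+1) ('C(i, l))%:R * ((-1) ^+ (i - l) * w (l + k)%N).

Lemma dif0 w k : dif w 0 k = w k.
Proof. by rewrite /dif big_ord1 bin0 subnn expr0 !mul1r add0n. Qed.

Lemma difS w i k : dif w i.+1 k = dif w i k.+1 - dif w i k.
Proof.
rewrite /dif (pascal_sum (fun l => (-1) ^+ (i.+1 - l) * w (l + k)%N)) addrC.
under eq_bigr => l _ do rewrite subSS [(l.+1 + k)%N]addSnnS.
have e2 : \sum_(l < i.+1) ('C(i, l))%:R * ((-1) ^+ (i.+1 - l) * w (l + k)%N)
   = - \sum_(l < i.+1) ('C(i, l))%:R * ((-1) ^+ (i - l) * w (l + k)%N).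
  rewrite -sumrN; apply: eq_bigr => l _.
  have hl : (l <= i)%N := ltn_ord l.
  by rewrite (subSn hl) exprS; ring.
by rewrite e2.
Qed.

Lemma dif_const c i k : dif (fun _ => c) i.+1 k = 0.
Proof.
elim: i k => [|i IH] k; first by rewrite difS !dif0 subrr.
by rewrite difS !IH subrr.
Qed.

Lemma difB w1 w2 i k :
  dif (fun j => w1 j - w2 j) i k = dif w1 i k - dif w2 i k.
Proof. rewrite /dif -sumrB; apply: eq_bigr => l _; ring. Qed.

Lemma fact_neq0 m : (m`!)%:R != 0 :> CC.
Proof. by rewrite pnatr_eq0 -lt0n fact_gt0. Qed.

Lemma binomC0 z : binomC z 0 = 1.
Proof. by rewrite /binomC big_ord0 /= divr1. Qed.

Lemma binomC_S1 z m : binomC (z + 1) m.+1 =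
  (z + 1) * (\prod_(i < m) (z - i%:R)) / (m.+1`!)%:R.
Proof.
rewrite /binomC big_ord_recl /= subr0; congr (_ * _ / _).
by apply: eq_bigr => i _; rewrite /bump /= -natr1; ring.
Qed.

Lemma binomC_S2 z m : binomC z m.+1 =
  (\prod_(i < m) (z - i%:R)) * (z - m%:R) / (m.+1`!)%:R.
Proof. by rewrite /binomC big_ord_recr. Qed.

Lemma binomC_pascal z m : binomC z m + binomC z m.+1 = binomC (z + 1) m.+1.
Proof.
rewrite binomC_S1 binomC_S2 {1}/binomC factS natrM.
set P := \prod_(_ < _) _.
have h1 := fact_neq0 m; have h2 := natr_neq0 m.
field; by rewrite h1 /= addrC natr1.
Qed.

Lemma binomC_shift y j : (y + 1) * binomC y j = (j.+1)%:R * binomC (y + 1) j.+1.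
Proof.
rewrite binomC_S1 {1}/binomC factS natrM.
set P := \prod_(_ < _) _.
have h1 := fact_neq0 j; have h2 := natr_neq0 j.
field; by rewrite h1 /= addrC natr1.
Qed.

Lemma mainM y n : forall s k (w : nat -> CC),
  \sum_(i < n.+1) ('C(n, i))%:R * (binomC y (i + s) * w (i + k)%N) =
  \sum_(i < n.+1) ('C(n, i))%:R * (binomC (y + (n - i)%:R) (n + s) * dif w i k).
Proof.
elim: n => [|n IH] s k w.
  have e0 : nat_of_ord (@ord0 0) = 0%N by [].
  by rewrite !big_ord1 e0 bin0 subnn addr0 !add0n dif0.
rewrite (pascal_sum (fun i => binomC y (i + s) * w (i + k)%N)).
under [X in _ + X = _]eq_bigr => i _ do rewrite [(i.+1 + s)%N]addSnnS [(i.+1 + k)%N]addSnnS.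
rewrite IH IH.
rewrite (pascal_sum (fun i => binomC (y + (n.+1 - i)%:R) (n.+1 + s) * dif w i k)).
rewrite -!big_split /=; apply: eq_bigr => i _.
have hi : (i <= n)%N := ltn_ord i.
rewrite subSS difS.
have hc : binomC (y + (n.+1 - i)%:R) (n.+1 + s) =
   binomC (y + (n - i)%:R) (n + s) + binomC (y + (n - i)%:R) (n + s.+1).
  by rewrite (subSn hi) -natr1 addrA addSn addnS binomC_pascal.
rewrite hc addSnnS; ring.
Qed.

Ltac side := repeat (apply/andP; split); rewrite ?nat1r -?natrD ?fact_neq0 // ?pnatr_eq0; try lia.

Definition wq (j : nat) : CC := (j.+2)%:R^-1.

Lemma nat3 (a : nat) : ((a.+3)%:R : CC) = a%:R + 3.
Proof. by rewrite -addn3 natrD. Qed.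

Lemma difwq i k : dif wq i k =
  (-1) ^+ i * (i`!)%:R * ((k.+1)`!)%:R / (((k + i).+2)`!)%:R.
Proof.
elim: i k => [|i IH] k.
  rewrite dif0 /wq addn0 expr0 mul1r (factS k.+1) natrM.
  have h1 := fact_neq0 k.+1; have h2 := natr_neq0 k.+1.
  by rewrite fact0 mul1r; field; side.
rewrite difS !IH addSn addnS.
rewrite (factS (k + i).+2) (factS k.+1) (factS i).
rewrite (natrM _ (k + i).+3) (natrM _ k.+2) (natrM _ i.+1).
have h1 := fact_neq0 (k + i).+2; have h4 := fact_neq0 k.+1; have h5 := fact_neq0 i.
set D := ((k + i).+2)`!%:R in h1 *; set A := (k.+1)`!%:R in h4 *; set I := i`!%:R in h5 *.
clearbody D A I.
have h3 : ((k + i).+3)%:R != 0 :> CC by rewrite natr_neq0.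
rewrite (nat3 (k + i)) in h3 *.
rewrite -(addn2 k) -(natr1 (R := CC) i) (natrD _ k 2) (natrD _ k i).
by rewrite exprS; field; rewrite h1 -natrD h3.
Qed.

Definition wB x j : CC := (-1) ^+ j * bernoulli_poly j.+2 x / (j.+2)%:R.
Definition G x i : CC := bernoulli_poly i.+2 (- x) / (i.+2)%:R
   + bernoulli_poly i.+1 (- x) / (i.+1)%:R.

Lemma difwB x i : dif (wB x) i 0 =
  (-1) ^+ i * \sum_(l < i.+1) ('C(i, l))%:R * (bernoulli_poly l.+2 x / (l.+2)%:R).
Proof.
rewrite /dif mulr_sumr; apply: eq_bigr => l _.
have hl : (l <= i)%N := ltn_ord l.
rewrite /wB addn0.
have e : (-1) ^+ (i - l) * (-1) ^+ l = (-1) ^+ i :> CC by rewrite -exprD subnK.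
rewrite -e; ring.
Qed.

Lemma sum_split2 (F : nat -> CC) n :
  \sum_(j < n.+2) F j = F 0%N + F 1%N + \sum_(l < n) F l.+2.
Proof. by rewrite !big_ord_recl /= addrA. Qed.

Lemma key x i : dif (wB x) i 0 - dif wq i 0 = G x i.
Proof.
rewrite difwB difwq /G !bern_neg /bref.
rewrite (sum_split2 (fun j => ('C(i.+2, j))%:R * bernoulli_poly j x) i.+1).
rewrite (sum_split2 (fun j => ('C(i.+1, j))%:R * bernoulli_poly j x) i).
have e : \sum_(l < i) ('C(i.+1, l.+2))%:R * bernoulli_poly l.+2 x =
         \sum_(l < i.+1) ('C(i.+1, l.+2))%:R * bernoulli_poly l.+2 x.
  by rewrite [RHS]big_ord_recr /= bin_small // mul0r addr0.
rewrite e; clear e.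
set S := \sum_(l < i.+1) _.
set A := \sum_(l < i.+1) _.
set A' := \sum_(l < i.+1) _.
have hS : A / (i.+2)%:R - A' / (i.+1)%:R = S.
  rewrite /A /A' /S !mulr_suml -sumrB; apply: eq_bigr => l _.
  have E1 : ('C(i.+2, l.+2))%:R = (i.+2)%:R * ('C(i.+1, l.+1))%:R / (l.+2)%:R :> CC.
    have h := natr_neq0 l.+1.
    rewrite -(natrM _ i.+2) (mul_bin_diag i.+2 l.+1) natrM; field; side.
  have E2 : ('C(i.+1, l.+2))%:R = (i.+1)%:R * ('C(i, l.+1))%:R / (l.+2)%:R :> CC.
    have h := natr_neq0 l.+1.
    rewrite -(natrM _ i.+1) (mul_bin_diag i.+1 l.+1) natrM; field; side.
  rewrite E1 E2 binS (natrD _ ('C(i, l.+1))).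
  field; side.
rewrite -hS bin0 bin0 bin1 bin1 bern0 add0n.
rewrite (factS i.+1) (factS i) (natrM _ i.+2) (natrM _ i.+1) (factS 0) fact0.
have hI := fact_neq0 i.
set I := i`!%:R in hI *; clearbody I.
rewrite !exprS.
field; side.
Qed.

Theorem mainTheorem2 (n : nat) (x y : CC) :
  (0 < n)%N -> y != -1 ->
  \sum_(2 <= r < n.+2)
     ((-1) ^+ r * bernoulli_poly r x / r%:R * ('C(n.-1, r - 2))%:R
        * binomC y (r.-1))
  = \sum_(1 <= r < n.+1)
      (('C(n.-1, r.-1))%:R * binomC (y + (n - r)%:R) n
        * (bernoulli_poly r.+1 (- x) / (r.+1)%:R
           + bernoulli_poly r (- x) / r%:R))
    + (y + 1)^-1 * binomC (y + n%:R) n.+1.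
Proof.
case: n => [//|m] _ hy.
have hy1 : y + 1 != 0 by rewrite addr_eq0.
rewrite succnK.
have L : \sum_(2 <= r < m.+3)
     ((-1) ^+ r * bernoulli_poly r x / r%:R * ('C(m, r - 2))%:R * binomC y (r.-1))
   = \sum_(i < m.+1) ('C(m, i))%:R * (binomC y (i + 1) * wB x (i + 0)%N).
  rewrite (big_addn 0 _ 2) (_ : (m.+3 - 2 = m.+1)%N) // big_mkord.
  apply: eq_bigr => i _; rewrite addnK addn2 succnK addn1 addn0 /wB !exprS; ring.
have R : \sum_(1 <= r < m.+2)
      (('C(m, r.-1))%:R * binomC (y + (m.+1 - r)%:R) m.+1
        * (bernoulli_poly r.+1 (- x) / (r.+1)%:R
           + bernoulli_poly r (- x) / r%:R))
   = \sum_(i < m.+1) ('C(m, i))%:R * (binomC (y + (m - i)%:R) (m + 1) * G x i).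
  rewrite (big_addn 0 _ 1) (_ : (m.+2 - 1 = m.+1)%N) // big_mkord.
  apply: eq_bigr => i _; rewrite addn1 succnK subSS addn1 /G; ring.
rewrite L R; clear L R.
have S1 : \sum_(i < m.+1) ('C(m, i))%:R * (binomC y (i + 1) * wB x (i + 0)%N)
  = \sum_(i < m.+1) ('C(m, i))%:R * (binomC y (i + 1) * (fun j => wB x j - wq j) (i + 0)%N)
  + \sum_(i < m.+1) ('C(m, i))%:R * (binomC y (i + 1) * wq (i + 0)%N).
  by rewrite -big_split; apply: eq_bigr => i _ /=; ring.
rewrite S1 (mainM y m 1 0 (fun j => wB x j - wq j)); clear S1.
have S2 : \sum_(i < m.+1) ('C(m, i))%:R * (binomC (y + (m - i)%:R) (m + 1)
            * dif (fun j => wB x j - wq j) i 0)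
        = \sum_(i < m.+1) ('C(m, i))%:R * (binomC (y + (m - i)%:R) (m + 1) * G x i).
  by apply: eq_bigr => i _; rewrite difB key.
rewrite S2; congr (_ + _); clear S2.
have S3 : \sum_(i < m.+1) ('C(m, i))%:R * (binomC y (i + 1) * wq (i + 0)%N)
   = (y + 1)^-1 * \sum_(i < m.+1) ('C(m, i))%:R * (binomC (y + 1) (i + 2) * 1).
  rewrite mulr_sumr; apply: eq_bigr => i _.
  have e := binomC_shift y i.+1.
  rewrite addn0 addn1 addn2 /wq.
  have h := natr_neq0 i.+1.
  rewrite -[binomC (y + 1) i.+2](@mulKf _ (i.+2)%:R) // -e.
  by field; rewrite hy1 andbT -natrD pnatr_eq0 addn_eq0.
rewrite S3 (mainM (y + 1) m 2 0 (fun _ => 1)) big_ord_recl big1 ?addr0.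
  by rewrite bin0 subn0 dif0 mulr1 mul1r -addrA nat1r addn2.
by move=> i _; rewrite dif_const !mulr0.
Qed.
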